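(* Let $T>0$ and let $\alpha,\beta:\mathbb{R}\to\mathbb{R}$ be continuous $T$-periodic functions such that $\alpha=0$ on $[\tfrac T2,T]$, $\beta=0$ on $[0,\tfrac T2]$, $\alpha>0$ on $(0,\tfrac T2)$, $\beta>0$ on $(\tfrac T2,T)$, and $\int_0^T\alpha=\int_0^T\beta=:A>0$. Consider the system $u'=\alpha(t)u(1-v)$, $v'=\beta(t)v(-1+u)$. Let $x>0$, let $(u,v)$ be the solution with $u(0)=v(0)=x$, and write $u_k:=u(kT)$, $v_k:=v(kT)$ for $k\ge0$. Fix $n\ge2$ and suppose \[ u_0+u_1+\cdots+u_{n-1}=n,\qquad v_0+v_1+\cdots+v_{n-1}=n . \] Then $u_h=v_{n-h}$ for all $h\in\{1,\ldots,n-1\}$.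
   Context: For $n\ge1$ the $nT$-Poincaré map is $\mathcal{P}_n(u_0,v_0)=(u(nT),v(nT))$ where $(u,v)$ solves the system with $(u(0),v(0))=(u_0,v_0)$. One has $u_n=u_0e^{(n-v_0-\cdots-v_{n-1})A}$ and $v_n=v_0e^{(u_1+\cdots+u_n-n)A}$, so the displayed sum conditions are equivalent to $nT$-periodicity of the solution. *)

(* Defs.v *)
From Stdlib Require Import Reals.
From Coquelicot Require Import Coquelicot.
Open Scope R_scope.

Fixpoint rsum (f : nat -> R) (n : nat) : R :=
  match n with
  | O => 0
  | S m => rsum f m + f m
  end.

(* Main.v *)
Require Import Defs.

From Stdlib Require Import Reals Lra Lia.
From Coquelicot Require Import Coquelicot.
Open Scope R_scope.

Lemma const_on (f df : R -> R) a b :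
  (forall t, a <= t <= b -> is_derive f t (df t)) ->
  (forall t, a <= t <= b -> df t = 0) ->
  forall t, a <= t <= b -> f t = f a.
Proof.
  intros Hd H0 t Ht.
  assert (H1 := is_RInt_derive f (fun _ => 0) a t).
  assert (H2 : is_RInt (fun _ : R => 0) a t (minus (f t) (f a))).
  { apply H1.
    - intros s Hs. rewrite Rmin_left in Hs by lra. rewrite Rmax_right in Hs by lra.
      rewrite <- (H0 s) by lra. apply Hd. lra.
    - intros s _. apply continuous_const. }
  assert (H3 := is_RInt_const a t 0).
  apply (is_RInt_unique (V:=R_CompleteNormedModule)) in H2. apply (is_RInt_unique (V:=R_CompleteNormedModule)) in H3.
  rewrite H2 in H3. unfold minus, plus, opp, scal in H3. simpl in H3.
  unfold mult in H3. simpl in H3. change (f t + - f a = (t - a) * 0) in H3. lra.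
Qed.

Lemma dRInt (f : R -> R) : (forall t, continuous f t) ->
  forall t, is_derive (fun s => RInt f 0 s) t (f t).
Proof.
  intros Hc t. apply (is_derive_RInt f (fun s => RInt f 0 s) 0); [|apply Hc].
  apply filter_forall. intros b. apply (RInt_correct (V:=R_CompleteNormedModule)). apply (ex_RInt_continuous (V:=R_CompleteNormedModule)).
  intros; apply Hc.
Qed.

Lemma dexpc (I : R -> R) c t d : is_derive I t d ->
  is_derive (fun s => exp (c * I s)) t (exp (c * I t) * (c * d)).
Proof.
  intros H.
  assert (H1 := is_derive_comp exp (fun s => c * I s) t _ _ (is_derive_exp _) (is_derive_scal I t c d H)).
  replace (exp (c * I t) * (c * d)) with (scal (c * d) (exp (c * I t))).
  exact H1. unfold scal; simpl; unfold mult; simpl. ring.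
Qed.

Lemma dmul (f g : R -> R) t df dg : is_derive f t df -> is_derive g t dg ->
  is_derive (fun s => f s * g s) t (df * g t + f t * dg).
Proof.
  intros H1 H2. assert (H := is_derive_mult f g t df dg H1 H2 Rmult_comm). exact H.
Qed.

Lemma step (T : R) (alpha beta u v : R -> R)
  (HT : 0 < T)
  (Hacont : forall t, continuous alpha t)
  (Hbcont : forall t, continuous beta t)
  (Ha0 : forall t, T / 2 <= t <= T -> alpha t = 0)
  (Hb0 : forall t, 0 <= t <= T / 2 -> beta t = 0)
  (Hu' : forall t, is_derive u t (alpha t * u t * (1 - v t)))
  (Hv' : forall t, is_derive v t (beta t * v t * (-1 + u t))) :
  u T = u 0 * exp ((1 - v 0) * RInt alpha 0 T) /\
  v T = v 0 * exp ((u T - 1) * RInt beta 0 T).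
Proof.
  assert (vc : forall t, 0 <= t <= T/2 -> v t = v 0).
  { apply (const_on v (fun t => beta t * v t * (-1 + u t))).
    - intros; apply Hv'.
    - intros t Ht. rewrite Hb0 by lra. ring. }
  assert (uc : forall t, T/2 <= t <= T -> u t = u (T/2)).
  { apply (const_on u (fun t => alpha t * u t * (1 - v t))).
    - intros; apply Hu'.
    - intros t Ht. rewrite Ha0 by lra. ring. }
  assert (uT : forall t, T/2 <= t <= T -> u t = u T).
  { intros t Ht. rewrite (uc t Ht), (uc T) by lra. reflexivity. }
  split.
  - set (c := -(1 - v 0)).
    assert (Hg := const_on (fun s => u s * exp (c * RInt alpha 0 s))
      (fun t => alpha t * u t * (1 - v t) * exp (c * RInt alpha 0 t) + u t * (exp (c * RInt alpha 0 t) * (c * alpha t))) 0 T).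
    specialize (Hg ltac:(intros t _; cbv beta; apply (dmul u (fun s => exp (c * RInt alpha 0 s))); [apply Hu'|apply dexpc, dRInt, Hacont])).
    specialize (Hg ltac:(intros t Ht; cbv beta; destruct (Rle_lt_dec t (T/2));
      [rewrite vc by lra; unfold c; ring | rewrite Ha0 by lra; ring]) T ltac:(lra)).
    simpl in Hg. rewrite RInt_point in Hg. unfold zero in Hg; simpl in Hg.
    rewrite Rmult_0_r, exp_0, Rmult_1_r in Hg.
    rewrite <- Hg.
    unfold c. rewrite Rmult_assoc, <- exp_plus. replace (_ + _) with 0 by ring.
    rewrite exp_0; ring.
  - set (c := -(u T - 1)).
    assert (Hg := const_on (fun s => v s * exp (c * RInt beta 0 s))
      (fun t => beta t * v t * (-1 + u t) * exp (c * RInt beta 0 t) + v t * (exp (c * RInt beta 0 t) * (c * beta t))) 0 T).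
    specialize (Hg ltac:(intros t _; cbv beta; apply (dmul v (fun s => exp (c * RInt beta 0 s))); [apply Hv'|apply dexpc, dRInt, Hbcont])).
    specialize (Hg ltac:(intros t Ht; cbv beta; destruct (Rle_lt_dec t (T/2));
      [rewrite Hb0 by lra; ring | rewrite uT by lra; unfold c; ring]) T ltac:(lra)).
    simpl in Hg. rewrite RInt_point in Hg. unfold zero in Hg; simpl in Hg.
    rewrite Rmult_0_r, exp_0, Rmult_1_r in Hg.
    rewrite <- Hg.
    unfold c. rewrite Rmult_assoc, <- exp_plus. replace (_ + _) with 0 by ring.
    rewrite exp_0; ring.
Qed.

Lemma shift_der (f : R -> R) c t l : is_derive f (t + c) l -> is_derive (fun s => f (s + c)) t l.
Proof.
  intros Hf.
  assert (Hg : is_derive (fun s : R => s + c) t 1).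
  { assert (H := is_derive_plus (fun s : R => s) (fun _ => c) t _ _ (is_derive_id t) (is_derive_const c t)).
    replace 1 with (plus (@one R_AbsRing) (@zero R_NormedModule)). exact H.
    unfold plus, one, zero; simpl. ring. }
  assert (H := is_derive_comp f (fun s => s + c) t l 1 Hf Hg).
  replace l with (scal 1 l). exact H. unfold scal; simpl; unfold mult; simpl. ring.
Qed.

Lemma per (f : R -> R) T : (forall t, f (t + T) = f t) -> forall k t, f (t + INR k * T) = f t.
Proof.
  intros H k; induction k; intros t.
  - simpl. f_equal. ring.
  - rewrite S_INR. replace (t + (INR k + 1) * T) with ((t + INR k * T) + T) by ring.
    rewrite H. apply IHk.
Qed.

Lemma rsum_shift (f : nat -> R) m : rsum f (S m) = f O + rsum (fun k => f (S k)) m.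
Proof. induction m; simpl in *. ring. rewrite IHm. ring. Qed.

Lemma exp_inv_mul y z c : y = z * exp c -> z = y * exp (- c).
Proof. intros ->. rewrite Rmult_assoc, <- exp_plus. replace (c + - c) with 0 by ring. rewrite exp_0; ring. Qed.

Theorem lemma3p1
  (T : R) (alpha beta : R -> R) (x : R) (u v : R -> R) (n : nat)
  (HT : 0 < T)
  (Hacont : forall t, continuous alpha t)
  (Hbcont : forall t, continuous beta t)
  (Haper : forall t, alpha (t + T) = alpha t)
  (Hbper : forall t, beta (t + T) = beta t)
  (Ha0 : forall t, T / 2 <= t <= T -> alpha t = 0)
  (Hb0 : forall t, 0 <= t <= T / 2 -> beta t = 0)
  (Hapos : forall t, 0 < t < T / 2 -> 0 < alpha t)
  (Hbpos : forall t, T / 2 < t < T -> 0 < beta t)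
  (HAeq : RInt alpha 0 T = RInt beta 0 T)
  (HApos : 0 < RInt alpha 0 T)
  (Hx : 0 < x)
  (Hu' : forall t, is_derive u t (alpha t * u t * (1 - v t)))
  (Hv' : forall t, is_derive v t (beta t * v t * (-1 + u t)))
  (Hu0 : u 0 = x) (Hv0 : v 0 = x)
  (Hn : (2 <= n)%nat)
  (Hsu : rsum (fun k => u (INR k * T)) n = INR n)
  (Hsv : rsum (fun k => v (INR k * T)) n = INR n) :
  forall h : nat, (1 <= h <= n - 1)%nat ->
    u (INR h * T) = v (INR (n - h) * T).
Proof.
  set (A := RInt alpha 0 T).
  set (a := fun k => u (INR k * T)). set (b := fun k => v (INR k * T)).
  change (forall h : nat, (1 <= h <= n - 1)%nat -> a h = b (n - h)%nat).
  fold a in Hsu. fold b in Hsv.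
  assert (rec : forall k, a (S k) = a k * exp ((1 - b k) * A) /\
                         b (S k) = b k * exp ((a (S k) - 1) * A)).
  { intros k.
    assert (H := step T alpha beta (fun t => u (t + INR k * T)) (fun t => v (t + INR k * T))
      HT Hacont Hbcont Ha0 Hb0).
    destruct H as [H1 H2].
    - intros t. apply shift_der. rewrite <- (per alpha T Haper k t). apply Hu'.
    - intros t. apply shift_der. rewrite <- (per beta T Hbper k t). apply Hv'.
    - simpl in H1, H2. unfold a, b. rewrite S_INR.
      replace ((INR k + 1) * T) with (T + INR k * T) by ring.
      rewrite !Rplus_0_l in H1, H2. fold A in H1.
      rewrite <- HAeq in H2. fold A in H2. split; [exact H1|exact H2]. }
  assert (a0 : a O = x) by (unfold a; simpl; rewrite Rmult_0_l; exact Hu0).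
  assert (b0 : b O = x) by (unfold b; simpl; rewrite Rmult_0_l; exact Hv0).
  assert (fa : forall m, a m = x * exp ((INR m - rsum b m) * A)).
  { induction m. simpl. rewrite a0. replace ((0 - 0) * A) with 0 by ring. rewrite exp_0; ring.
    destruct (rec m) as [-> _]. rewrite IHm, Rmult_assoc, <- exp_plus. rewrite S_INR. simpl.
    f_equal. f_equal. ring. }
  assert (fb : forall m, b m = x * exp ((rsum (fun k => a (S k)) m - INR m) * A)).
  { induction m. simpl. rewrite b0. replace ((0 - 0) * A) with 0 by ring. rewrite exp_0; ring.
    destruct (rec m) as [_ ->]. rewrite IHm, Rmult_assoc, <- exp_plus. rewrite S_INR. simpl.
    f_equal. f_equal. ring. }
  assert (an : a n = x).
  { rewrite fa, Hsv. replace ((INR n - INR n) * A) with 0 by ring. rewrite exp_0; ring. }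
  assert (bn : b n = x).
  { rewrite fb. assert (E := rsum_shift a n). simpl in E. rewrite Hsu, an, a0 in E.
    replace (rsum (fun k => a (S k)) n - INR n) with 0 by lra.
    rewrite Rmult_0_l, exp_0; ring. }
  assert (rev : forall j, (j <= n)%nat -> a (n - j)%nat = b j /\ b (n - j)%nat = a j).
  { induction j; intros Hj.
    - rewrite Nat.sub_0_r. split; congruence.
    - destruct IHj as [IH1 IH2]. lia.
      set (p := (n - S j)%nat). replace (n - j)%nat with (S p) in IH1, IH2 by (unfold p; lia).
      destruct (rec p) as [R1 R2]. destruct (rec j) as [R3 R4].
      apply exp_inv_mul in R1. apply exp_inv_mul in R2.
      assert (Hbp : b p = a (S j)).
      { rewrite R2, IH1, IH2, R3. f_equal. f_equal. ring. }
      split; [|exact Hbp].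
      rewrite R1, Hbp, IH1, R4. f_equal. f_equal. ring. }
  intros h Hh. destruct (rev (n - h)%nat ltac:(lia)) as [H _].
  replace (n - (n - h))%nat with h in H by lia. exact H.
Qed.
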